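(* For relatively prime integers $r, s$ put $u = r^2 + s^2$, $v = 2r^2 - s^2$, $A = uv(u^2-v^2)$, and $\mathcal{S} = \{\pm u(u+v),\ \pm u(u-v),\ \pm v(u+v),\ \pm v(u-v)\}$. Then for all but finitely many pairs $(r,s)$ of relatively prime integers with $r\neq 0$, no element of $\mathcal{S}$ represents the same class in $\mathbb{Q}^\times/(\mathbb{Q}^\times)^2$ as any of $1, -1, A, -A$.
   Context: $\mathbb{Q}^\times/(\mathbb{Q}^\times)^2$ denotes the group of nonzero rationals modulo nonzero squares; two nonzero rationals represent the same class iff their quotient is a square of a rational. *)

(* Defs.v *)
From mathcomp Require Import all_boot all_order all_algebra.
Set Implicit Arguments. Unset Strict Implicit. Unset Printing Implicit Defensive.
Import Order.TTheory GRing.Theory Num.Theory.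
Local Open Scope ring_scope.

(* Two nonzero rationals represent the same class in Q^x/(Q^x)^2
   iff their quotient is a square of a rational. *)
Definition same_sq_class (a b : rat) : Prop :=
  a != 0 /\ b != 0 /\ exists q : rat, a / b = q ^+ 2.

Definition u_of (r s : int) : int := r ^+ 2 + s ^+ 2.
Definition v_of (r s : int) : int := 2 * r ^+ 2 - s ^+ 2.
Definition A_of (r s : int) : int :=
  u_of r s * v_of r s * (u_of r s ^+ 2 - v_of r s ^+ 2).

Definition S_of (r s : int) : seq int :=
  let u := u_of r s in let v := v_of r s in
  [:: u * (u + v); - (u * (u + v)); u * (u - v); - (u * (u - v));
      v * (u + v); - (v * (u + v)); v * (u - v); - (v * (u - v))].

Definition T_of (r s : int) : seq int := [:: 1; -1; A_of r s; - A_of r s].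

Definition exceptional (r s : int) : Prop :=
  exists2 x, x \in S_of r s & exists2 y, y \in T_of r s &
    same_sq_class (x%:~R) (y%:~R).

(* Main.v *)
Require Import Defs.
From mathcomp Require Import all_boot all_order all_algebra.
From mathcomp Require Import zify ring lra.
Import Order.TTheory GRing.Theory Num.Theory.
Set Implicit Arguments. Unset Strict Implicit. Unset Printing Implicit Defensive.
Local Open Scope ring_scope.

Lemma gcdnX2 (m n : nat) : (gcdn (m ^ 2) (n ^ 2) = (gcdn m n) ^ 2)%N.
Proof.
have [d0|dpos] := posnP (gcdn m n).
  have : (0 < gcdn m n)%N = false by rewrite d0.
  rewrite gcdn_gt0 => /norP[]; rewrite !lt0n !negbK => /eqP-> /eqP->.
  by rewrite gcdn0.
set d := gcdn m n in dpos *.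
have em : m = (m %/ d * d)%N by rewrite divnK // dvdn_gcdl.
have en : n = (n %/ d * d)%N by rewrite divnK // dvdn_gcdr.
have cop : gcdn (m %/ d) (n %/ d) = 1%N.
  apply/eqP; rewrite -(eqn_pmul2r dpos) mul1n muln_gcdl -em -en //.
have : coprime (m %/ d) (n %/ d) by rewrite /coprime cop.
rewrite -(@coprime_pexpl 2) // -(@coprime_pexpr 2) // => /eqP c2.
rewrite {1}em {1}en !expnMn -muln_gcdl c2 mul1n //.
Qed.

Lemma sqn_cop (a b c : nat) : coprime a b -> (a * b = c ^ 2)%N -> (a = (gcdn a c) ^ 2)%N.
Proof.
move=> cop e; rewrite -gcdnX2 -e.
have -> : (a ^ 2 = a * a)%N by rewrite expnS expn1.
by rewrite -muln_gcdr (eqP cop) muln1.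
Qed.

Lemma sq_cop (a b c : int) : coprimez a b -> 0 <= a -> 0 <= b -> a * b = c ^+ 2 ->
  exists x : int, 0 <= x /\ a = x ^+ 2.
Proof.
move=> cop ha hb e.
have e' : (`|a| * `|b| = `|c| ^ 2)%N by rewrite -abszM e abszX.
exists (gcdn `|a| `|c|)%:Z; split => //.
have -> : (gcdn `|a| `|c|)%:Z ^+ 2 = ((gcdn `|a| `|c|) ^ 2)%N%:Z by rewrite -!natz natrX.
by rewrite -(sqn_cop cop e') gez0_abs.
Qed.

Lemma par2 (a : int) : exists q, a = 2 * q \/ a = 2 * q + 1.
Proof.
exists (a %/ 2)%Z; have := divz_eq a 2.
have := modz_ge0 a (isT : (2:int) != 0); have := ltz_pmod a (isT : (0:int) < 2).
lia.
Qed.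

Lemma par3 (a : int) : exists q, a = 3 * q \/ a = 3 * q + 1 \/ a = 3 * q + 2.
Proof.
exists (a %/ 3)%Z; have := divz_eq a 3.
have := modz_ge0 a (isT : (3:int) != 0); have := ltz_pmod a (isT : (0:int) < 3).
lia.
Qed.

Lemma sq3 (a b t : int) : a ^+ 2 + b ^+ 2 = 3 * t -> (exists a', a = 3 * a') /\ (exists b', b = 3 * b').
Proof.
have [qa ha] := par3 a; have [qb hb] := par3 b.
rewrite !expr2 => e.
case: ha => [ha|[ha|ha]]; case: hb => [hb|[hb|hb]]; subst; try lia.
by split; [exists qa | exists qb].
Qed.

Lemma odd_sq8 (a k : int) : a = 2 * k + 1 -> exists t, a ^+ 2 = 8 * t + 1.
Proof.
move=> ->; have [q [hq|hq]] := par2 k; subst.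
  by exists (q * (2 * q + 1)); rewrite expr2; ring.
by exists ((q + 1) * (2 * q + 1)); rewrite expr2; ring.
Qed.

Lemma ratsq (m : int) (t : rat) : (m%:~R : rat) = t ^+ 2 -> exists k : int, m = k ^+ 2.
Proof.
move=> e.
have dpos := denq_gt0 t.
have cop : coprimez (numq t) (denq t) := coprime_num_den t.
have tE : t = (numq t)%:~R / (denq t)%:~R by rewrite divq_num_den.
have e2 : m * (denq t) ^+ 2 = (numq t) ^+ 2.
  apply: (@intr_inj rat); rewrite rmorphM /= !rmorphXn /= e {1}tE.
  rewrite expr_div_n mulfVK // expf_neq0 // intr_eq0; lia.
have hd : ((denq t) ^+ 2 %| (numq t) ^+ 2 * 1)%Z by rewrite mulr1 -e2 dvdz_mull.
rewrite Gauss_dvdzr in hd; last by rewrite coprimezXl // coprimezXr // coprimez_sym.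
have d1 : denq t = 1.
  move: hd; rewrite dvdz1 abszX => /eqP h.
  have : (`|denq t| = 1)%N by move: h; case: (`|denq t|)%N => [|[|k]] //.
  lia.
by exists (numq t); rewrite -e2 d1 expr1n mulr1.
Qed.

Lemma same_class_sq (x y : int) : same_sq_class x%:~R y%:~R -> exists k : int, x * y = k ^+ 2.
Proof.
case=> hx [hy [q hq]].
apply: (@ratsq _ (q * y%:~R)).
rewrite rmorphM /= exprMn -hq expr2 mulrA divfK //.
Qed.

Lemma copI (a b : int) : (forall g : int, (g %| a)%Z -> (g %| b)%Z -> `|g|%N = 1%N) -> coprimez a b.
Proof.
move=> h; rewrite /coprimez; apply/eqP.
have := h (gcdz a b) (dvdz_gcdl a b) (dvdz_gcdr a b).
by rewrite /gcdz /= => ->.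
Qed.

Lemma copE (a b g : int) : coprimez a b -> (g %| a)%Z -> (g %| b)%Z -> `|g|%N = 1%N.
Proof.
move=> /eqP c ha hb.
have : (g %| gcdz a b)%Z by rewrite dvdz_gcd ha hb.
rewrite c dvdzE /= dvdn1 => /eqP //.
Qed.

Lemma cop_dvd (a b c d : int) : coprimez a b -> (c %| a)%Z -> (d %| b)%Z -> coprimez c d.
Proof.
move=> cop hc hd; apply: copI => g h1 h2.
apply: (copE cop); [exact: dvdz_trans h1 hc | exact: dvdz_trans h2 hd].
Qed.

Lemma abs1_sq (e : int) : `|e|%N = 1%N -> e ^+ 2 = 1.
Proof. move=> h; have : e = 1 \/ e = -1 by lia. by case=> ->; rewrite ?sqrrN expr1n. Qed.

Lemma sqeq (a b : int) : a ^+ 2 = b ^+ 2 -> a = b \/ a = - b.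
Proof. move/eqP; rewrite eqf_sqr => /orP[/eqP|/eqP]; by [left|right]. Qed.

Lemma sq_abs (x : int) : x ^+ 2 = (`|x| ^ 2)%N%:Z.
Proof. by rewrite -abszX gez0_abs // sqr_ge0. Qed.

Lemma dvd_sq_le (g a : int) : (g %| a)%Z -> a != 0 -> g ^+ 2 <= a ^+ 2.
Proof.
move=> h a0.
have : (`|g| <= `|a|)%N by apply: dvdn_leq; [lia| exact: h].
move=> le. rewrite !sq_abs lez_nat leq_exp2r //.
Qed.

Lemma sq_lt_abs (x s : int) : x ^+ 2 < s ^+ 2 -> (`|x| < `|s|)%N.
Proof. by rewrite !sq_abs ltz_nat ltn_exp2r. Qed.

Lemma sq_le_abs (x s : int) : x ^+ 2 <= s ^+ 2 -> (`|x| <= `|s|)%N.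
Proof. by rewrite !sq_abs lez_nat leq_exp2r. Qed.

Lemma sq_cop2 (a b c : int) : coprimez a b -> 0 <= a -> 0 <= b -> a * b = c ^+ 2 ->
  exists x y : int, [/\ 0 <= x, 0 <= y, a = x ^+ 2 & b = y ^+ 2].
Proof.
move=> cop ha hb e.
have [x [hx ex]] := sq_cop cop ha hb e.
have [y [hy ey]] : exists y : int, 0 <= y /\ b = y ^+ 2.
  by apply: (@sq_cop b a c); rewrite 1?coprimez_sym // mulrC.
by exists x, y.
Qed.

Lemma euclid3 (a b : int) : (3 %| a * b)%Z -> (3 %| a)%Z \/ (3 %| b)%Z.
Proof.
rewrite !dvdzE abszM Euclid_dvdM //= => /orP[]; by [left|right].
Qed.

Lemma odd_cop2 (f k : int) : f = 2 * k + 1 -> coprimez f 2.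
Proof.
move=> hf; apply: copI => g /dvdzP [q hq] h2.
have : (`|g| <= 2)%N by apply: dvdn_leq.
have : g != 0 by apply/eqP => g0; move: hq; rewrite g0 mulr0; lia.
move=> g0 le.
have : g = 1 \/ g = -1 \/ g = 2 \/ g = -2 by lia.
case=> [->|[->|[e|e]]] //; rewrite e in hq; lia.
Qed.

Lemma dvd_odd2 (g m : int) : coprimez g 2 -> (g %| 2 * m)%Z -> (g %| m)%Z.
Proof. by move=> c; rewrite Gauss_dvdzr. Qed.

Lemma dvd_odd4 (g m : int) : coprimez g 2 -> (g %| 4 * m)%Z -> (g %| m)%Z.
Proof.
move=> c; rewrite Gauss_dvdzr //.
have -> : (4 : int) = 2 ^+ 2 by [].
exact: coprimezXr.
Qed.

Lemma quart (k l m : int) : 0 <= k -> 0 <= l -> coprimez k l -> k * l = m ^+ 4 ->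
  exists x y : int, [/\ k = x ^+ 4, l = y ^+ 4, m ^+ 2 = x ^+ 2 * y ^+ 2 & coprimez x y].
Proof.
move=> hk hl cop e.
have e' : k * l = (m ^+ 2) ^+ 2 by rewrite -exprM.
have [K [L [hK hL eK eL]]] := sq_cop2 cop hk hl e'.
have copKL : coprimez K L.
  by move: cop; rewrite eK eL coprimez_pexpl // coprimez_pexpr.
have eKL : K * L = m ^+ 2.
  have : (K * L) ^+ 2 = (m ^+ 2) ^+ 2 by rewrite exprMn -eK -eL.
  case/sqeq => // h.
  have : 0 <= K * L by apply: mulr_ge0.
  have := sqr_ge0 m. rewrite h. lia.
have [x [y [hx hy ex ey]]] := sq_cop2 copKL hK hL eKL.
exists x, y; split.
- by rewrite eK ex -exprM.
- by rewrite eL ey -exprM.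
- by rewrite -eKL ex ey.
- by move: copKL; rewrite ex ey coprimez_pexpl // coprimez_pexpr.
Qed.

Lemma nnroot (z : int) : exists z0, 0 <= z0 /\ z ^+ 2 = z0 ^+ 2.
Proof. exists (`|z|%N)%:Z; split => //; by rewrite sq_abs -!natz natrX. Qed.

Lemma odd_ne0 (y k : int) : y = 2 * k + 1 -> y != 0.
Proof. move=> ->; apply/eqP; lia. Qed.

Lemma FA_C2 (x y z kx ky : int) : x = 2 * kx + 1 -> y = 2 * ky + 1 -> coprimez x y ->
  x ^+ 4 - x ^+ 2 * y ^+ 2 + y ^+ 4 = z ^+ 2 -> x ^+ 2 != y ^+ 2 ->
  exists g e f h : int, [/\ coprimez g e, 2 * g ^+ 2 - e ^+ 2 = f ^+ 2,
    2 * e ^+ 2 - g ^+ 2 = h ^+ 2, g ^+ 2 != e ^+ 2 & g ^+ 2 <= y ^+ 2 /\ e ^+ 2 <= y ^+ 2].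
Proof.
move=> hx hy cxy eF nxy.
have [z0 [hz0 ez]] := nnroot z. rewrite ez in eF.
have [G hG] : exists G, G = 2 * z0 - (2 * x ^+ 2 - y ^+ 2) by eexists.
have [H hH] : exists H, H = 2 * z0 + (2 * x ^+ 2 - y ^+ 2) by eexists.
have y4 : y ^+ 4 = y ^+ 2 * y ^+ 2 by rewrite -exprD.
have x4 : x ^+ 4 = x ^+ 2 * x ^+ 2 by rewrite -exprD.
have eGH : G * H = 3 * y ^+ 4.
  rewrite hG hH y4; rewrite x4 y4 in eF; rewrite !expr2 in eF *. clear -eF; nia.
have y0 : y != 0 := odd_ne0 hy.
have y2pos : 0 < y ^+ 2 by rewrite lt_def sqr_ge0 andbT sqrf_eq0.
have y4pos : 0 < y ^+ 4 by rewrite y4 mulr_gt0.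
have GH4 : G + H = 4 * z0 by rewrite hG hH; clear; lia.
have Gpos : 0 < G.
  rewrite ltNge; apply/negP => hG0.
  have hH0 : 0 <= H by clear -GH4 hz0 hG0; lia.
  have : G * H <= 0 by apply: mulr_le0_ge0.
  clear -eGH y4pos; lia.
have Hpos : 0 < H.
  rewrite ltNge; apply/negP => hH0.
  have hG0 : 0 <= G by clear -GH4 hz0 hH0; lia.
  have : G * H <= 0 by apply: mulr_ge0_le0.
  clear -eGH y4pos; lia.
have Godd : G = 2 * (z0 - x ^+ 2 + 2 * ky ^+ 2 + 2 * ky) + 1.
  rewrite hG hy !expr2; clear; lia.
have HG : H - G = 4 * x ^+ 2 - 2 * y ^+ 2 by rewrite hG hH; clear; lia.
clear hG hH.
have cG2 : coprimez G 2 := odd_cop2 Godd.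
have cGH : coprimez G H.
  apply: copI => w wG wH.
  have cw2 : coprimez w 2 by apply: (cop_dvd cG2 wG (dvdzz 2)).
  have cwy : coprimez w y.
    apply: copI => v vw vy.
    have cv2 : coprimez v 2 by apply: (cop_dvd cw2 vw (dvdzz 2)).
    have v4 : (v %| 4 * x ^+ 2)%Z.
      have -> : 4 * x ^+ 2 = (H - G) + 2 * y ^+ 2 by rewrite HG; clear; lia.
      apply: rpredD; [apply: rpredB; exact: dvdz_trans vw _ | apply: dvdz_mull; exact: dvdz_exp].
    have vx : (v %| x ^+ 2)%Z by apply: dvd_odd4.
    by apply: (copE (coprimezXl 2 cxy)).
  have h1 : (w ^+ 2 %| y ^+ 4 * 3)%Z by rewrite mulrC -eGH expr2 dvdz_mul.
  rewrite Gauss_dvdzr in h1; last by rewrite coprimezXl // coprimezXr.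
  have w0 : w != 0.
    apply/eqP => w0; move: wG; rewrite w0 dvd0z => /eqP G0.
    by move: Gpos; rewrite G0 ltxx.
  have : (`|w ^+ 2| <= 3)%N by apply: dvdn_leq.
  rewrite abszX => le.
  have lt2 : (`|w| < 2)%N.
    rewrite ltnNge; apply/negP => h2.
    have h4 : (2 ^ 2 <= `|w| ^ 2)%N by rewrite leq_exp2r.
    by have := leq_trans h4 le.
  have wpos : (0 < `|w|)%N by rewrite absz_gt0.
  by apply/eqP; rewrite eqn_leq -ltnS lt2.
have [kx2 hx8] := odd_sq8 hx.
have h3 : (3 %| G * H)%Z by rewrite eGH dvdz_mulr.
case: (euclid3 h3) => /dvdzP [q hq].
- (* 3 | G : impossible *)
  have cqH : coprimez q H by apply: (cop_dvd cGH _ (dvdzz H)); rewrite hq dvdz_mulr.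
  have eq4 : q * H = y ^+ 4.
    apply: (@mulfI _ (3 : int)) => //; rewrite mulrA [3 * q]mulrC -hq eGH //.
  have qpos : 0 < q by move: Gpos; rewrite hq pmulr_lgt0.
  have [e [f [ee ef ey cef]]] := quart (ltW qpos) (ltW Hpos) cqH eq4.
  have [ke he] : exists ke, e = 2 * ke + 1.
    have [k [ek|ek]] := par2 e; last by exists k.
    move: ey; rewrite ek hy !expr2; clear; lia.
  have [kf hf] : exists kf, f = 2 * kf + 1.
    have [k [ek|ek]] := par2 f; last by exists k.
    move: ey; rewrite ek hy !expr2; clear; lia.
  have [t ht] := odd_sq8 he. have [u hu] := odd_sq8 hf.
  have e4 : e ^+ 4 = (e ^+ 2) ^+ 2 by rewrite -exprM.
  have f4 : f ^+ 4 = (f ^+ 2) ^+ 2 by rewrite -exprM.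
  move: HG; rewrite hq ee ef ey e4 f4 ht hu hx8 !expr2; clear; lia.
- have cGq : coprimez G q by apply: (cop_dvd cGH (dvdzz G)); rewrite hq dvdz_mulr.
  have eq4 : G * q = y ^+ 4.
    apply: (@mulfI _ (3 : int)) => //; rewrite mulrCA -[3 * q]mulrC -hq eGH //.
  have qpos : 0 < q by move: Hpos; rewrite hq pmulr_lgt0.
  have [f [e [ef ee ey cfe]]] := quart (ltW Gpos) (ltW qpos) cGq eq4.
  have [ke he] : exists ke, e = 2 * ke + 1.
    have [k [ek|ek]] := par2 e; last by exists k.
    move: ey; rewrite ek hy !expr2; clear; lia.
  have [kf hf] : exists kf, f = 2 * kf + 1.
    have [k [ek|ek]] := par2 f; last by exists k.
    move: ey; rewrite ek hy !expr2; clear; lia.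
  have [t ht] := odd_sq8 he. have [u hu] := odd_sq8 hf.
  have e4 : e ^+ 4 = (e ^+ 2) ^+ 2 by rewrite -exprM.
  have f4 : f ^+ 4 = (f ^+ 2) ^+ 2 by rewrite -exprM.
  have key : 4 * x ^+ 2 = 3 * (8 * t + 1) ^+ 2 + 2 * (8 * t + 1) * (8 * u + 1) - (8 * u + 1) ^+ 2.
    move: HG; rewrite hq ee ef ey e4 f4 ht hu !expr2; clear; lia.
  have [B hB] : exists B, B = 4 * t + 4 * u + 1 by eexists.
  have [A hA] : exists A, A = 12 * t - 4 * u + 1 by eexists.
  have eAB : A * B = x ^+ 2 by move: key; rewrite hA hB !expr2; clear; lia.
  have t0 : 0 <= t by have := sqr_ge0 e; rewrite ht; clear; lia.
  have u0 : 0 <= u by have := sqr_ge0 f; rewrite hu; clear; lia.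
  have Bpos : 0 < B by rewrite hB; clear -t0 u0; lia.
  have A0 : 0 <= A by rewrite -(pmulr_lge0 _ Bpos) eAB sqr_ge0.
  have cef : coprimez e f by rewrite coprimez_sym.
  have cAB : coprimez A B.
    apply: copI => w wA wB.
    have cB2 : coprimez B 2 by apply: (odd_cop2 (k := 2 * t + 2 * u)); rewrite hB; clear; lia.
    have cw2 : coprimez w 2 by apply: (cop_dvd cB2 wB (dvdzz 2)).
    have we : (w %| e ^+ 2)%Z.
      apply: dvd_odd4 => //.
      have -> : 4 * e ^+ 2 = 2 * A + 2 * B by rewrite hA hB ht; clear; lia.
      by apply: rpredD; apply: dvdz_mull.
    have wf : (w %| f ^+ 2)%Z.
      apply: dvd_odd4 => //.
      have -> : 4 * f ^+ 2 = 6 * B - 2 * A by rewrite hA hB hu; clear; lia.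
      by apply: rpredB; apply: dvdz_mull.
    by apply: (copE (coprimezXl 2 (coprimezXr 2 cef))).
  have [hh [g [hh0 g0 eA eB]]] := sq_cop2 cAB A0 (ltW Bpos) eAB.
  exists g, e, f, hh; split.
  + apply: copI => w wg we.
    have wf2 : (w %| f ^+ 2)%Z.
      have -> : f ^+ 2 = 2 * g ^+ 2 - e ^+ 2 by rewrite -eB hB ht hu; clear; lia.
      by apply: rpredB; [apply: dvdz_mull; exact: dvdz_exp | exact: dvdz_exp].
    have cwf : coprimez w f by apply: (cop_dvd cef we (dvdzz f)).
    by apply: (copE (coprimezXr 2 cwf) (dvdzz w)).
  + rewrite -eB hB ht hu; clear; lia.
  + rewrite -eB -eA hA hB ht; clear; lia.
  + apply/eqP => gee.
    have ef2 : f ^+ 2 = e ^+ 2 by move: gee; rewrite -eB hB ht hu; clear; lia.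
    have e1 : `|e|%N = 1%N.
      apply: (copE cef (dvdzz e)).
      by case: (sqeq ef2) => ->; rewrite ?dvdzz // rpredN dvdzz.
    have := abs1_sq e1; rewrite ht => t00.
    have u00 : u = 0 by move: ef2; rewrite ht hu; clear -t00; lia.
    move/eqP: nxy; apply.
    rewrite -eAB ey ht hu hA hB; clear -t00 u00; lia.
  + have tu : 0 <= t * u by apply: mulr_ge0.
    rewrite ey ht hu -eB hB; split; clear -tu t0 u0; lia.
Qed.

Lemma cop_sub_sq (a d : int) : coprimez a d -> coprimez a (a ^+ 2 - d ^+ 2).
Proof.
move=> c; apply: copI => g ga gs.
have gd : (g %| d ^+ 2)%Z.
  have -> : d ^+ 2 = a ^+ 2 - (a ^+ 2 - d ^+ 2) by rewrite opprB addrC subrK.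
  by apply: rpredB => //; apply: dvdz_exp.
exact: (copE (coprimezXr 2 c) ga gd).
Qed.

Lemma kl2 (k l : int) : k * l = 2 -> (k = 1 /\ l = 2) \/ (k = -1 /\ l = -2) \/ (k = 2 /\ l = 1) \/ (k = -2 /\ l = -1).
Proof.
move=> e.
have kd : (k %| 2)%Z by apply/dvdzP; exists l; rewrite mulrC.
have k0 : k != 0 by apply/eqP => k0; move: e; rewrite k0 mul0r.
have : (`|k| <= 2)%N by apply: dvdn_leq.
move=> le.
have : k = 1 \/ k = -1 \/ k = 2 \/ k = -2 by clear -le k0; lia.
case=> [h|[h|[h|h]]]; subst k; clear -e; lia.
Qed.

Lemma even_cop (b c : int) : coprimez b c -> (exists k, b = 2 * k) -> (exists k, c = 2 * k) -> False.
Proof.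
move=> cop [k hk] [j hj].
have h2b : (2 %| b)%Z by rewrite hk; apply: dvdz_mulr.
have h2c : (2 %| c)%Z by rewrite hj; apply: dvdz_mulr.
by have := copE cop h2b h2c.
Qed.

Lemma both_odd (b c w : int) : coprimez b c -> b ^+ 2 - c ^+ 2 = 2 * w ->
  (exists kb, b = 2 * kb + 1) /\ (exists kc, c = 2 * kc + 1).
Proof.
move=> cop e.
have [kb [hb|hb]] := par2 b; have [kc [hc|hc]] := par2 c.
- by case: (even_cop cop (ex_intro _ kb hb) (ex_intro _ kc hc)).
- move: e; rewrite hb hc !expr2; clear; lia.
- move: e; rewrite hb hc !expr2; clear; lia.
- by split; [exists kb | exists kc].
Qed.

Lemma finish4 (x y u v c d Q r : int) : coprimez x y -> x ^+ 2 - y ^+ 2 = c * (u * v) ->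
  u ^+ 2 - v ^+ 2 = d * (x * y) -> (c = 2 \/ c = -2) -> (d = 1 \/ d = -1) -> u * v != 0 ->
  (y %| Q)%Z -> Q != 0 -> Q ^+ 2 < r ^+ 2 ->
  exists x y z kx ky : int, [/\ x = 2 * kx + 1, y = 2 * ky + 1, coprimez x y,
    x ^+ 4 - x ^+ 2 * y ^+ 2 + y ^+ 4 = z ^+ 2 & x ^+ 2 != y ^+ 2 /\ y ^+ 2 < r ^+ 2].
Proof.
move=> cxy h1 h2 hc hd uv0 yQ Q0 Qlt.
have [w hw] : exists w, x ^+ 2 - y ^+ 2 = 2 * w.
  by rewrite h1; case: hc => ->; [exists (u * v) | exists (- (u * v))]; ring.
have [[kx hx] [ky hy]] := both_odd cxy hw.
have s1 : (x ^+ 2 - y ^+ 2) ^+ 2 = 4 * (u * v) ^+ 2.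
  by rewrite h1; case: hc => ->; ring.
have s2 : (x * y) ^+ 2 = (u ^+ 2 - v ^+ 2) ^+ 2.
  by rewrite h2; case: hd => ->; ring.
exists x, y, (u ^+ 2 + v ^+ 2), kx, ky; split => //.
- have x4 : x ^+ 4 = x ^+ 2 * x ^+ 2 by rewrite -exprD.
  have y4 : y ^+ 4 = y ^+ 2 * y ^+ 2 by rewrite -exprD.
  rewrite x4 y4; move: s1 s2; rewrite !expr2; clear; lia.
- split.
  + rewrite -subr_eq0 h1 mulf_neq0 //; case: hc => ->; by [].
  + apply: le_lt_trans Qlt; exact: dvd_sq_le.
Qed.

Lemma PQMN (P Q M N r s : int) : coprimez r s -> s = P - Q -> P ^+ 2 + Q ^+ 2 = r ^+ 2 ->
  M + N = r -> P * Q = M * N -> P * Q != 0 ->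
  exists x y z kx ky : int, [/\ x = 2 * kx + 1, y = 2 * ky + 1, coprimez x y,
    x ^+ 4 - x ^+ 2 * y ^+ 2 + y ^+ 4 = z ^+ 2 & x ^+ 2 != y ^+ 2 /\ y ^+ 2 < r ^+ 2].
Proof.
move=> crs hs ePQ hMN eq4 PQ0.
have P0 : P != 0 by apply: contraNneq PQ0 => ->; rewrite mul0r.
have Q0 : Q != 0 by apply: contraNneq PQ0 => ->; rewrite mulr0.
have M0 : M != 0 by apply: contraNneq PQ0 => M0; rewrite eq4 M0 mul0r.
have N0 : N != 0 by apply: contraNneq PQ0 => N0; rewrite eq4 N0 mulr0.
have cPQ : coprimez P Q.
  apply: copI => g gP gQ.
  have gs : (g %| s)%Z by rewrite hs; apply: rpredB.
  have gr2 : (g ^+ 2 %| r ^+ 2)%Z by rewrite -ePQ; apply: rpredD; apply: dvdz_exp2r.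
  rewrite dvdz_pexp2r // in gr2.
  exact: (copE crs gr2 gs).
set al := gcdz P M.
have al0 : al != 0 by rewrite gcdz_eq0 negb_and P0.
have eP : P = (P %/ al)%Z * al by rewrite divzK // dvdz_gcdl.
have eM : M = (M %/ al)%Z * al by rewrite divzK // dvdz_gcdr.
set be := (P %/ al)%Z in eP *. set ga := (M %/ al)%Z in eM *.
have cbg : coprimez be ga.
  rewrite /coprimez; apply/eqP; apply: (mulIf al0).
  have alpos : `|al|%:Z = al by rewrite gez0_abs // /al.
  by rewrite mul1r -{1}alpos mulz_gcdl -eP -eM.
clearbody be ga.
have eq5 : be * Q = ga * N.
  apply: (mulfI al0); rewrite !mulrA ![al * _]mulrC -eP -eM //.
have gQ : (ga %| Q)%Z.
  have cgb : coprimez ga be by rewrite coprimez_sym.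
  by rewrite -(Gauss_dvdzr _ cgb) eq5 dvdz_mulr.
have ga0 : ga != 0 by apply/eqP => g0; move/eqP: M0; rewrite eM g0 mul0r.
have be0 : be != 0 by apply/eqP => g0; move/eqP: P0; rewrite eP g0 mul0r.
have eQ : Q = (Q %/ ga)%Z * ga by rewrite divzK.
set de := (Q %/ ga)%Z in eQ *. clearbody de.
have de0 : de != 0 by apply/eqP => g0; move/eqP: Q0; rewrite eQ g0 mul0r.
have eN : N = be * de.
  apply: (mulfI ga0); rewrite -eq5 eQ; clear; ring.
have key : (al ^+ 2 - de ^+ 2) * (be ^+ 2 - ga ^+ 2) = 2 * (al * be * ga * de).
  move: ePQ; rewrite -hMN eP eQ eM eN !expr2; clear; lia.
have cad : coprimez al de.
  apply: (cop_dvd cPQ); [rewrite eP; apply: dvdz_mull; exact: dvdzz | rewrite eQ; apply: dvdz_mulr; exact: dvdzz].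
have cda : coprimez de al by rewrite coprimez_sym.
have cgb : coprimez ga be by rewrite coprimez_sym.
have d1 : (al * de %| be ^+ 2 - ga ^+ 2)%Z.
  rewrite Gauss_dvdz //; apply/andP; split.
  - rewrite -(Gauss_dvdzr _ (cop_sub_sq cad)) key.
    by apply/dvdzP; exists (2 * be * ga * de); ring.
  - have c2 : coprimez de (al ^+ 2 - de ^+ 2).
      rewrite -coprimezN opprB; exact: cop_sub_sq.
    rewrite -(Gauss_dvdzr _ c2) key.
    by apply/dvdzP; exists (2 * al * be * ga); ring.
have d2 : (be * ga %| al ^+ 2 - de ^+ 2)%Z.
  rewrite Gauss_dvdz //; apply/andP; split.
  - rewrite -(Gauss_dvdzl _ (cop_sub_sq cbg)) key.
    by apply/dvdzP; exists (2 * al * ga * de); ring.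
  - have c2 : coprimez ga (be ^+ 2 - ga ^+ 2).
      rewrite -coprimezN opprB; exact: cop_sub_sq.
    rewrite -(Gauss_dvdzl _ c2) key.
    by apply/dvdzP; exists (2 * al * be * de); ring.
have [l hl] := dvdzP d1. have [k hk] := dvdzP d2.
have ekl : k * l = 2.
  have nz : al * be * ga * de != 0 by rewrite !mulf_neq0.
  apply: (mulIf nz); move: key; rewrite hk hl => key.
  rewrite -key; clear; ring.
have Qlt : Q ^+ 2 < r ^+ 2.
  rewrite -ePQ ltrDr lt_def sqr_ge0 andbT sqrf_eq0 //.
case: (kl2 ekl) => [[k1 l1]|[[k1 l1]|[[k1 l1]|[k1 l1]]]]; subst k l.
- apply: (finish4 (Q := Q) cbg hl hk); by [left | rewrite mulf_neq0 | rewrite eQ dvdz_mull | ].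
- apply: (finish4 (Q := Q) cbg hl hk); by [right | rewrite mulf_neq0 | rewrite eQ dvdz_mull | ].
- apply: (finish4 (Q := Q) cad hk hl); by [left | rewrite mulf_neq0 | rewrite eQ dvdz_mulr | ].
- apply: (finish4 (Q := Q) cad hk hl); by [right | rewrite mulf_neq0 | rewrite eQ dvdz_mulr | ].
Qed.
Lemma C2_step (r s a b : int) : coprimez r s -> 2 * r ^+ 2 - s ^+ 2 = a ^+ 2 ->
  2 * s ^+ 2 - r ^+ 2 = b ^+ 2 -> r ^+ 2 != s ^+ 2 ->
  exists g e : int, [/\ coprimez g e, exists f, 2 * g ^+ 2 - e ^+ 2 = f ^+ 2,
    exists h, 2 * e ^+ 2 - g ^+ 2 = h ^+ 2, g ^+ 2 != e ^+ 2 & g ^+ 2 < r ^+ 2 /\ e ^+ 2 < r ^+ 2].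
Proof.
move=> crs ha hb nrs.
have [k [hr|hr]] := par2 r; have [j [hs|hs]] := par2 s.
- by case: (even_cop crs (ex_intro _ k hr) (ex_intro _ j hs)).
- have [l [hb'|hb']] := par2 b; move: hb; rewrite hb' hr hs !expr2; clear; lia.
- have [l [ha'|ha']] := par2 a; move: ha; rewrite ha' hr hs !expr2; clear; lia.
have [i hi] : exists i, a = 2 * i + 1.
  have [i [ha'|ha']] := par2 a; last by exists i.
  move: ha; rewrite ha' hr hs !expr2; clear; lia.
have [l hl] : exists l, b = 2 * l + 1.
  have [l [hb'|hb']] := par2 b; last by exists l.
  move: hb; rewrite hb' hr hs !expr2; clear; lia.
have e1 : s = (i + j + 1) - (i - j) by rewrite hs; clear; lia.
have e2 : (i + j + 1) ^+ 2 + (i - j) ^+ 2 = r ^+ 2.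
  move: ha; rewrite hi hs hr !expr2; clear; lia.
have e3 : (k + l + 1) + (k - l) = r by rewrite hr; clear; lia.
have e4 : (i + j + 1) * (i - j) = (k + l + 1) * (k - l).
  move: ha hb; rewrite hi hl hs hr !expr2; clear; lia.
have e5 : (i + j + 1) * (i - j) != 0.
  apply/eqP => h0; move/eqP: nrs; apply.
  move: ha h0; rewrite hi hs hr !expr2; clear; lia.
have [x [y [z [kx [ky [hx hy cxy eF [nxy ylt]]]]]]] := PQMN crs e1 e2 e3 e4 e5.
have [g [e [f [h [cge ef eh nge [gy ey]]]]]] := FA_C2 hx hy cxy eF nxy.
exists g, e; split => //; [by exists f | by exists h | split; exact: le_lt_trans ylt].
Qed.

Lemma C2 (n : nat) : forall r s a b : int, (`|r| <= n)%N -> (`|s| <= n)%N -> coprimez r s ->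
  2 * r ^+ 2 - s ^+ 2 = a ^+ 2 -> 2 * s ^+ 2 - r ^+ 2 = b ^+ 2 -> r ^+ 2 = s ^+ 2.
Proof.
elim: n => [|n IH] r s a b hr hs crs ha hb.
  have -> : r = 0 by clear -hr; lia.
  have -> : s = 0 by clear -hs; lia.
  by [].
case: (eqVneq (r ^+ 2) (s ^+ 2)) => // nrs.
have [g [e [cge [f hf] [h hh] nge [gl el]]]] := C2_step crs ha hb nrs.
have g1 : (`|g| <= n)%N by have := sq_lt_abs gl; clear -hr; lia.
have e1 : (`|e| <= n)%N by have := sq_lt_abs el; clear -hr; lia.
by case/eqP: nge; apply: (IH g e f h).
Qed.

Lemma split2 (al be sg : int) : 0 <= al -> 0 <= be -> coprimez al be -> al * be = 2 * sg ^+ 2 ->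
  exists p q kq : int, [/\ al + be = q ^+ 2 + 2 * p ^+ 2, sg ^+ 2 = p ^+ 2 * q ^+ 2 & q = 2 * kq + 1].
Proof.
move=> ha hb cab e.
have [m [hm|hm]] := par2 al.
- have e' : m * be = sg ^+ 2.
    apply: (@mulfI _ (2 : int)) => //; rewrite mulrA -hm e //.
  have cmb : coprimez m be by apply: (cop_dvd cab _ (dvdzz be)); rewrite hm dvdz_mull.
  have m0 : 0 <= m by clear -ha hm; lia.
  have [p [q [_ _ ep eq]]] := sq_cop2 cmb m0 hb e'.
  have [kb hkb] : exists kb, be = 2 * kb + 1.
    have [kb [hkb|hkb]] := par2 be; last by exists kb.
    by case: (even_cop cab (ex_intro _ m hm) (ex_intro _ kb hkb)).
  have [kq hkq] : exists kq, q = 2 * kq + 1.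
    have [kq [hkq|hkq]] := par2 q; last by exists kq.
    move: hkb; rewrite eq hkq !expr2; clear; lia.
  exists p, q, kq; split => //.
  + by rewrite hm ep eq; clear; ring.
  + by rewrite -e' ep eq.
- have [n [hn|hn]] := par2 be; last first.
    move: e; rewrite hm hn; clear; lia.
  have e' : al * n = sg ^+ 2.
    apply: (@mulfI _ (2 : int)) => //; rewrite mulrCA -hn e //.
  have can : coprimez al n by apply: (cop_dvd cab (dvdzz al)); rewrite hn dvdz_mull.
  have n0 : 0 <= n by clear -hb hn; lia.
  have [q [p [_ _ eq ep]]] := sq_cop2 can ha n0 e'.
  have [kq hkq] : exists kq, q = 2 * kq + 1.
    have [kq [hkq|hkq]] := par2 q; last by exists kq.
    move: hm; rewrite eq hkq !expr2; clear; lia.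
  exists p, q, kq; split => //.
  + by rewrite hn ep eq; clear; ring.
  + by rewrite -e' ep eq mulrC.
Qed.

Lemma split3 (g h p : int) : 0 < g -> 0 < h -> coprimez g h -> g * h = 3 * p ^+ 4 ->
  exists x y : int, [/\ g + h = 3 * x ^+ 4 + y ^+ 4, p ^+ 2 = x ^+ 2 * y ^+ 2 & coprimez x y].
Proof.
move=> gpos hpos cgh e.
have h3 : (3 %| g * h)%Z by rewrite e dvdz_mulr.
case: (euclid3 h3) => /dvdzP [q hq].
- have cqh : coprimez q h by apply: (cop_dvd cgh _ (dvdzz h)); rewrite hq dvdz_mulr.
  have e4 : q * h = p ^+ 4.
    apply: (@mulfI _ (3 : int)) => //; rewrite mulrA [3 * q]mulrC -hq e //.
  have qpos : 0 < q by move: gpos; rewrite hq pmulr_lgt0.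
  have [x [y [ex ey ep cxy]]] := quart (ltW qpos) (ltW hpos) cqh e4.
  by exists x, y; split => //; rewrite hq ex ey mulrC.
- have cgq : coprimez g q by apply: (cop_dvd cgh (dvdzz g)); rewrite hq dvdz_mulr.
  have e4 : g * q = p ^+ 4.
    apply: (@mulfI _ (3 : int)) => //; rewrite mulrCA -[3 * q]mulrC -hq e //.
  have qpos : 0 < q by move: hpos; rewrite hq pmulr_lgt0.
  have [y [x [ey ex ep cyx]]] := quart (ltW gpos) (ltW qpos) cgq e4.
  exists x, y; split => //; first by rewrite hq ex ey mulrC addrC.
  - by rewrite ep mulrC.
  - by rewrite coprimez_sym.
Qed.

Lemma sq_dvd3 (w : int) : (w ^+ 2 %| 3)%Z -> w != 0 -> `|w|%N = 1%N.
Proof.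
move=> h1 w0.
have : (`|w ^+ 2| <= 3)%N by apply: dvdn_leq.
rewrite abszX => le.
have lt2 : (`|w| < 2)%N.
  rewrite ltnNge; apply/negP => h2.
  have h4 : (2 ^ 2 <= `|w| ^ 2)%N by rewrite leq_exp2r.
  by have := leq_trans h4 le.
have wpos : (0 < `|w|)%N by rewrite absz_gt0.
by apply/eqP; rewrite eqn_leq -ltnS lt2.
Qed.

Lemma sq_ge1 (z : int) : z != 0 -> 1 <= z ^+ 2.
Proof.
move=> z0; rewrite sq_abs.
have : (0 < `|z|)%N by rewrite absz_gt0.
move=> h; rewrite -[1]/(1%N%:Z) lez_nat expn_gt0 h //.
Qed.

Lemma C1_step (r s a b : int) : coprimez r s -> r ^+ 2 + s ^+ 2 = a ^+ 2 ->
  r ^+ 2 - 2 * s ^+ 2 = b ^+ 2 -> s != 0 ->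
  exists r' s' a' b' : int, [/\ coprimez r' s', r' ^+ 2 + s' ^+ 2 = a' ^+ 2,
    r' ^+ 2 - 2 * s' ^+ 2 = b' ^+ 2, s' != 0 & s' ^+ 2 < s ^+ 2].
Proof.
move=> crs0 ha0 hb0 s0.
have [r1 [hr1 er]] := nnroot r.
have crs : coprimez r1 s.
  by case: (sqeq er) => e; move: crs0; rewrite e ?coprimeNz.
have [a1 [ha1 ea]] := nnroot a. have [b1 [hb1 eb]] := nnroot b.
rewrite er ea in ha0; rewrite er eb in hb0.
clear er ea eb crs0 r a b.
rename r1 into r; rename a1 into a; rename b1 into b.
rename ha0 into ha; rename hb0 into hb.
have [k hk] : exists k, r = 2 * k + 1.
  have [k [hk|hk]] := par2 r; last by exists k.
  have [j [hj|hj]] := par2 s.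
    by case: (even_cop crs (ex_intro _ k hk) (ex_intro _ j hj)).
  have [l [hl|hl]] := par2 b; move: hb; rewrite hk hj hl !expr2; clear; lia.
have [sg hsg] : exists sg, s = 2 * sg.
  have [j [hj|hj]] := par2 s; first by exists j.
  have [l [hl|hl]] := par2 b; move: hb; rewrite hk hj hl !expr2; clear; lia.
have [j hj] : exists j, b = 2 * j + 1.
  have [l [hl|hl]] := par2 b; last by exists l.
  move: hb; rewrite hk hsg hl !expr2; clear; lia.
have [i hi] : exists i, a = 2 * i + 1.
  have [l [hl|hl]] := par2 a; last by exists l.
  move: ha; rewrite hk hsg hl !expr2; clear; lia.
have k0 : 0 <= k by clear -hr1 hk; lia.
have j0 : 0 <= j by clear -hb1 hj; lia.
have i0 : 0 <= i by clear -ha1 hi; lia.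
have eab : (k - j) * (k + j + 1) = 2 * sg ^+ 2.
  move: hb; rewrite hk hsg hj !expr2; clear; lia.
have bepos : 0 < k + j + 1 by clear -k0 j0; lia.
have al0 : 0 <= k - j.
  by rewrite -(pmulr_lge0 _ bepos) eab mulr_ge0 // sqr_ge0.
have cab : coprimez (k - j) (k + j + 1).
  apply: copI => w w1 w2.
  have wr : (w %| r)%Z.
    have -> : r = (k - j) + (k + j + 1) by rewrite hk; clear; lia.
    exact: rpredD.
  have wb : (w %| b)%Z.
    have -> : b = (k + j + 1) - (k - j) by rewrite hj; clear; lia.
    exact: rpredB.
  have cw2 : coprimez w 2 by apply: (cop_dvd (odd_cop2 hk) wr (dvdzz 2)).
  have ws : (w %| s ^+ 2)%Z.
    apply: dvd_odd2 => //.
    have -> : 2 * s ^+ 2 = r * r - b * b by move: hb; rewrite !expr2; clear; lia.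
    by apply: rpredB; apply: dvdz_mulr.
  exact: (copE (coprimezXr 2 crs) wr ws).
have [p [q [kq [epq esg hq]]]] := split2 al0 (ltW bepos) cab eab.
have er : r = q ^+ 2 + 2 * p ^+ 2 by rewrite -epq hk; clear; lia.
have es : s ^+ 2 = 4 * (p ^+ 2 * q ^+ 2) by rewrite hsg -esg; clear; rewrite expr2; ring.
have es' : s = 2 * (p * q) \/ s = - (2 * (p * q)).
  by apply: sqeq; rewrite es; clear; ring.
have cpq : coprimez p q.
  apply: copI => w wp wq.
  have wr : (w %| r)%Z by rewrite er; apply: rpredD; [exact: dvdz_exp | apply: dvdz_mull; exact: dvdz_exp].
  have ws : (w %| s)%Z.
    by case: es' => ->; rewrite ?rpredN; apply: dvdz_mull; apply: dvdz_mulr.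
  exact: (copE crs wr ws).
have p0 : p != 0.
  apply/eqP => p0; move/eqP: s0; apply.
  by case: es' => ->; rewrite p0 !mul0r ?mulr0 ?oppr0.
have q0 : q != 0 := odd_ne0 hq.
have [u hu] := odd_sq8 hq.
have u0 : 0 <= u by have := sqr_ge0 q; rewrite hu; clear; lia.
have P0 : 0 <= p ^+ 2 := sqr_ge0 p.
have p4 : p ^+ 4 = p ^+ 2 * p ^+ 2 by rewrite -exprD.
have egh : (4 * u + 2 * p ^+ 2 - i) * (4 * u + 2 * p ^+ 2 + i + 1) = 3 * p ^+ 4.
  move: ha; rewrite p4 er es hu hi; clear; rewrite !expr2; lia.
have hpos : 0 < 4 * u + 2 * p ^+ 2 + i + 1 by clear -u0 P0 i0; lia.
have p4pos : 0 < p ^+ 4 by rewrite p4 mulr_gt0 // lt_def sqr_ge0 andbT sqrf_eq0.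
have gpos : 0 < 4 * u + 2 * p ^+ 2 - i.
  by rewrite -(pmulr_lgt0 _ hpos) egh pmulr_rgt0.
set gg := 4 * u + 2 * p ^+ 2 - i in egh gpos *.
set hh := 4 * u + 2 * p ^+ 2 + i + 1 in egh hpos *.
have eT : gg + hh = q ^+ 2 + 4 * p ^+ 2 by rewrite /gg /hh hu; clear; lia.
have ea : hh - gg = a by rewrite /gg /hh hi; clear; lia.
clearbody gg hh.
have cgh : coprimez gg hh.
  apply: copI => w wg wh.
  have cwp : coprimez w p.
    apply: copI => v vw vp.
    have vq : (v %| q ^+ 2)%Z.
      have -> : q ^+ 2 = (gg + hh) - 4 * p ^+ 2 by rewrite eT; clear; lia.
      apply: rpredB; first by apply: rpredD; apply: dvdz_trans vw _.
      by apply: dvdz_mull; apply: dvdz_exp.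
    exact: (copE (coprimezXr 2 cpq) vp vq).
  have w2 : (w ^+ 2 %| p ^+ 4 * 3)%Z by rewrite mulrC -egh expr2 dvdz_mul.
  rewrite Gauss_dvdzr in w2; last by rewrite coprimezXl // coprimezXr.
  apply: sq_dvd3 => //.
  apply/eqP => w0; move: wg; rewrite w0 dvd0z => /eqP g0.
  by move: gpos; rewrite g0 ltxx.
have [x [y [exy ep cxy]]] := split3 gpos hpos cgh egh.
have x4 : x ^+ 4 = x ^+ 2 * x ^+ 2 by rewrite -exprD.
have y4 : y ^+ 4 = y ^+ 2 * y ^+ 2 by rewrite -exprD.
have eAB : (y ^+ 2 - x ^+ 2) * (y ^+ 2 - 3 * x ^+ 2) = q ^+ 2.
  move: eT; rewrite exy x4 y4 ep; clear; lia.
have [mA hA] : exists mA, y ^+ 2 - x ^+ 2 = 2 * mA + 1.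
  have [m [hm|hm]] := par2 (y ^+ 2 - x ^+ 2); last by exists m.
  move: eAB; rewrite hm hq !expr2; clear; lia.
have cAB : coprimez (y ^+ 2 - x ^+ 2) (y ^+ 2 - 3 * x ^+ 2).
  apply: copI => w w1 w2.
  have cw2 : coprimez w 2 by apply: (cop_dvd (odd_cop2 hA) w1 (dvdzz 2)).
  have wx : (w %| x ^+ 2)%Z.
    apply: dvd_odd2 => //.
    have -> : 2 * x ^+ 2 = (y ^+ 2 - x ^+ 2) - (y ^+ 2 - 3 * x ^+ 2) by clear; lia.
    exact: rpredB.
  have wy : (w %| y ^+ 2)%Z.
    apply: dvd_odd2 => //.
    have -> : 2 * y ^+ 2 = 3 * (y ^+ 2 - x ^+ 2) - (y ^+ 2 - 3 * x ^+ 2) by clear; lia.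
    by apply: rpredB => //; apply: dvdz_mull.
  exact: (copE (coprimezXl 2 (coprimezXr 2 cxy)) wx wy).
have q2pos : 0 < q ^+ 2 by rewrite lt_def sqr_ge0 andbT sqrf_eq0.
have x0 : x != 0.
  by apply/eqP => x0; move: p4pos; rewrite p4 ep x0 expr0n /= !mul0r ltxx.
have y0 : y != 0.
  by apply/eqP => y0; move: p4pos; rewrite p4 ep y0 expr0n /= !mulr0 ltxx.
case: (ltrgtP 0 (y ^+ 2 - x ^+ 2)) => hA0; last first.
- by move: hA; rewrite -hA0; clear; lia.
- (* negative case : parity contradiction *)
  have hB0 : y ^+ 2 - 3 * x ^+ 2 < 0.
    rewrite ltNge; apply/negP => hB.
    have : (y ^+ 2 - x ^+ 2) * (y ^+ 2 - 3 * x ^+ 2) <= 0 by apply: mulr_le0_ge0 => //; apply: ltW.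
    by rewrite eAB leNgt q2pos.
  have eAB' : (- (y ^+ 2 - x ^+ 2)) * (- (y ^+ 2 - 3 * x ^+ 2)) = q ^+ 2 by rewrite mulrNN.
  have cAB' : coprimez (- (y ^+ 2 - x ^+ 2)) (- (y ^+ 2 - 3 * x ^+ 2)) by rewrite coprimeNz coprimezN.
  have nA : 0 <= - (y ^+ 2 - x ^+ 2) by rewrite oppr_ge0 ltW.
  have nB : 0 <= - (y ^+ 2 - 3 * x ^+ 2) by rewrite oppr_ge0 ltW.
  have [c [d [_ _ ec ed]]] := sq_cop2 cAB' nA nB eAB'.
  have [kx [ex|ex]] := par2 x; have [ky [ey|ey]] := par2 y;
    have [kc [ec'|ec']] := par2 c; have [kd [ed'|ed']] := par2 d;
    move: hA ec ed; rewrite ?ex ?ey ?ec' ?ed' !expr2; clear; lia.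
-
  have hB0 : 0 < y ^+ 2 - 3 * x ^+ 2 by rewrite -(pmulr_rgt0 _ hA0) eAB.
  have [c [d [c0 d0 ec ed]]] := sq_cop2 cAB (ltW hA0) (ltW hB0) eAB.
  exists c, x, y, d; split.
  + apply: copI => w wc wx.
    have wy : (w %| y ^+ 2)%Z.
      have -> : y ^+ 2 = c ^+ 2 + x ^+ 2 by rewrite -ec; clear; lia.
      by apply: rpredD; apply: dvdz_exp.
    exact: (copE (coprimezXr 2 cxy) wx wy).
  + by rewrite -ec; clear; lia.
  + by rewrite -ec -ed; clear; lia.
  + exact: x0.
  + have yq1 : 1 <= (y * q) ^+ 2 by apply: sq_ge1; rewrite mulf_neq0.
    have x2pos : 0 < x ^+ 2 by rewrite lt_def sqr_ge0 andbT sqrf_eq0.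
    have : x ^+ 2 <= x ^+ 2 * (y * q) ^+ 2 by rewrite ler_peMr // ltW.
    move: es; rewrite ep exprMn; clear -x2pos; move=> es h; rewrite es; lia.
Qed.
Lemma C1 (n : nat) : forall r s a b : int, (`|s| <= n)%N -> coprimez r s ->
  r ^+ 2 + s ^+ 2 = a ^+ 2 -> r ^+ 2 - 2 * s ^+ 2 = b ^+ 2 -> s = 0.
Proof.
elim: n => [|n IH] r s a b hs crs ha hb.
  by clear -hs; lia.
case: (eqVneq s 0) => // s0.
have [r' [s' [a' [b' [c' ha' hb' s'0 lt]]]]] := C1_step crs ha hb s0.
have : (`|s'| <= n)%N by have := sq_lt_abs lt; clear -hs; lia.
move=> hs'; have := IH r' s' a' b' hs' c' ha' hb'.
by move=> e; move: s'0; rewrite e eqxx.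
Qed.

Definition sqz (n : int) := exists k : int, n = k ^+ 2.

Lemma sqz_cancel (c X : int) : c != 0 -> sqz (c ^+ 2 * X) -> sqz X.
Proof.
move=> c0 [k hk].
have d : (c ^+ 2 %| k ^+ 2)%Z by rewrite -hk dvdz_mulr.
rewrite dvdz_pexp2r // in d.
have [m hm] := dvdzP d.
exists m; apply: (mulfI (_ : c ^+ 2 != 0)); first by rewrite expf_neq0.
by rewrite hk hm exprMn mulrC.
Qed.

Lemma div3sq (m t : int) : m ^+ 2 = 3 * t -> exists m', m = 3 * m'.
Proof.
have [q [h|[h|h]]] := par3 m; first by exists q.
all: rewrite h !expr2; clear; lia.
Qed.

Lemma cop3 (r s r' s' : int) : coprimez r s -> r = 3 * r' -> s = 3 * s' -> False.
Proof.
move=> c hr hs.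
have h3r : (3 %| r)%Z by rewrite hr; apply: dvdz_mulr.
have h3s : (3 %| s)%Z by rewrite hs; apply: dvdz_mulr.
by have := copE c h3r h3s.
Qed.

Lemma not3u (r s t : int) : coprimez r s -> r ^+ 2 + s ^+ 2 = 3 * t -> False.
Proof.
move=> c e; have [[r' hr] [s' hs]] := sq3 e; exact: cop3 c hr hs.
Qed.

Lemma not3v (r s t : int) : coprimez r s -> 2 * r ^+ 2 - s ^+ 2 = 3 * t -> False.
Proof.
move=> c e.
have [a [ha|[ha|ha]]] := par3 r; have [b [hb|[hb|hb]]] := par3 s;
  try (by apply: (cop3 c ha hb));
  move: e; rewrite ha hb !expr2; clear; lia.
Qed.

Lemma v_ne0 (r s : int) : coprimez r s -> 2 * r ^+ 2 - s ^+ 2 != 0.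
Proof.
move=> c; apply/eqP => e.
have [a [ha|ha]] := par2 r; have [b [hb|hb]] := par2 s.
- exact: (even_cop c (ex_intro _ a ha) (ex_intro _ b hb)).
- move: e; rewrite ha hb !expr2; clear; lia.
- move: e; rewrite ha hb !expr2; clear; lia.
- move: e; rewrite ha hb !expr2; clear; lia.
Qed.

Lemma w_ne0 (r s : int) : coprimez r s -> 2 * s ^+ 2 - r ^+ 2 != 0.
Proof. by move=> c; apply: v_ne0; rewrite coprimez_sym. Qed.

Lemma u_pos (r s : int) : r != 0 -> 0 < r ^+ 2 + s ^+ 2.
Proof.
move=> r0; apply: ltr_wpDr; first exact: sqr_ge0.
by rewrite lt_def sqr_ge0 andbT sqrf_eq0.
Qed.

Lemma g_dvd3 (r s g : int) : coprimez r s -> (g %| 3 * r ^+ 2)%Z ->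
  (forall v, (v %| g)%Z -> (v %| r)%Z -> (v %| s ^+ 2)%Z) -> (g %| 3)%Z.
Proof.
move=> c h hv.
have cgr : coprimez g (r ^+ 2).
  apply: coprimezXr; apply: copI => v vg vr.
  exact: (copE (coprimezXr 2 c) vr (hv v vg vr)).
by move: h; rewrite mulrC Gauss_dvdzr.
Qed.

Lemma dvd3_cases (g : int) : (g %| 3)%Z -> `|g|%N = 1%N \/ (3 %| g)%Z.
Proof.
move=> h.
have : (`|g| <= 3)%N by apply: dvdn_leq.
have g0 : g != 0 by apply/eqP => g0; move: h; rewrite g0 dvd0z.
move=> le.
have : g = 1 \/ g = -1 \/ g = 2 \/ g = -2 \/ g = 3 \/ g = -3 by clear -le g0; lia.
case=> [->|[->|[e|[e|[->|->]]]]]; [by left|by left| | | by right | by right; rewrite rpredN].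
- by move: h; rewrite e.
- by move: h; rewrite e.
Qed.

Lemma cop_uw (r s : int) : coprimez r s -> coprimez (r ^+ 2 + s ^+ 2) (2 * s ^+ 2 - r ^+ 2).
Proof.
move=> c; apply: copI => g gu gw.
have g3 : (g %| 3)%Z.
  apply: (g_dvd3 c).
  - have -> : 3 * r ^+ 2 = 2 * (r ^+ 2 + s ^+ 2) - (2 * s ^+ 2 - r ^+ 2) by clear; lia.
    by apply: rpredB => //; apply: dvdz_mull.
  - move=> v vg vr.
    have -> : s ^+ 2 = (r ^+ 2 + s ^+ 2) - r ^+ 2 by clear; lia.
    by apply: rpredB; [exact: dvdz_trans vg gu | exact: dvdz_exp].
case: (dvd3_cases g3) => // h3.
have [t ht] := dvdzP (dvdz_trans h3 gu).
by case: (not3u (t := t) c); rewrite ht mulrC.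
Qed.

Lemma cop_vw (r s : int) : coprimez r s -> coprimez (2 * r ^+ 2 - s ^+ 2) (2 * s ^+ 2 - r ^+ 2).
Proof.
move=> c; apply: copI => g gv gw.
have g3 : (g %| 3)%Z.
  apply: (g_dvd3 c).
  - have -> : 3 * r ^+ 2 = 2 * (2 * r ^+ 2 - s ^+ 2) + (2 * s ^+ 2 - r ^+ 2) by clear; lia.
    by apply: rpredD => //; apply: dvdz_mull.
  - move=> v vg vr.
    have -> : s ^+ 2 = 2 * r ^+ 2 - (2 * r ^+ 2 - s ^+ 2) by clear; lia.
    apply: rpredB; last exact: dvdz_trans vg gv.
    by apply: dvdz_mull; exact: dvdz_exp.
case: (dvd3_cases g3) => // h3.
have [t ht] := dvdzP (dvdz_trans h3 gv).
by case: (not3v (t := t) c); rewrite ht mulrC.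
Qed.

Lemma sqz_eq (P Q c : int) : sqz P -> P = c ^+ 2 * Q -> c != 0 -> sqz Q.
Proof. by move=> h e c0; apply: (sqz_cancel c0); rewrite -e. Qed.

Lemma classify (r s x y : int) : x \in S_of r s -> y \in T_of r s -> coprimez r s -> r != 0 ->
  sqz (x * y) ->
  exists e : int, (e = 1 \/ e = -1) /\
   [\/ sqz (e * (3 * (r ^+ 2 + s ^+ 2))),
       sqz (e * ((r ^+ 2 + s ^+ 2) * (2 * s ^+ 2 - r ^+ 2))),
       sqz (e * (3 * (2 * r ^+ 2 - s ^+ 2)))
     | sqz (e * ((2 * r ^+ 2 - s ^+ 2) * (2 * s ^+ 2 - r ^+ 2)))].
Proof.
move=> xS yT c r0 h.
have u0 : r ^+ 2 + s ^+ 2 != 0 by rewrite gt_eqF // u_pos.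
have v0 := v_ne0 c. have w0 := w_ne0 c.
have three0 : (3 : int) != 0 by [].
have nz1 : 3 * r ^+ 2 * (r ^+ 2 + s ^+ 2) != 0 by rewrite !mulf_neq0 // expf_neq0.
have nz2 : r * (r ^+ 2 + s ^+ 2) * (2 * s ^+ 2 - r ^+ 2) != 0 by rewrite !mulf_neq0.
have nz3 : 3 * r ^+ 2 * (2 * r ^+ 2 - s ^+ 2) != 0 by rewrite !mulf_neq0 // expf_neq0.
have nz4 : r * (2 * r ^+ 2 - s ^+ 2) * (2 * s ^+ 2 - r ^+ 2) != 0 by rewrite !mulf_neq0.
have one0 : (1 : int) != 0 by [].
move: xS yT h; rewrite /S_of /T_of /A_of /u_of /v_of !inE.
move=> /orP[/eqP->|/orP[/eqP->|/orP[/eqP->|/orP[/eqP->|/orP[/eqP->|/orP[/eqP->|/orP[/eqP->|/eqP->]]]]]]];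
move=> /orP[/eqP->|/orP[/eqP->|/orP[/eqP->|/eqP->]]] h.
- exists (1); split; first by left.
  apply: Or41; apply: (sqz_eq (c := r) h) => //; ring.
- exists (-1); split; first by right.
  apply: Or41; apply: (sqz_eq (c := r) h) => //; ring.
- exists (1); split; first by left.
  apply: Or44; apply: (sqz_eq (c := (3 * r ^+ 2 * (r ^+ 2 + s ^+ 2))) h) => //; ring.
- exists (-1); split; first by right.
  apply: Or44; apply: (sqz_eq (c := (3 * r ^+ 2 * (r ^+ 2 + s ^+ 2))) h) => //; ring.
- exists (-1); split; first by right.
  apply: Or41; apply: (sqz_eq (c := r) h) => //; ring.
- exists (1); split; first by left.
  apply: Or41; apply: (sqz_eq (c := r) h) => //; ring.
- exists (-1); split; first by right.
  apply: Or44; apply: (sqz_eq (c := (3 * r ^+ 2 * (r ^+ 2 + s ^+ 2))) h) => //; ring.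
- exists (1); split; first by left.
  apply: Or44; apply: (sqz_eq (c := (3 * r ^+ 2 * (r ^+ 2 + s ^+ 2))) h) => //; ring.
- exists (1); split; first by left.
  apply: Or42; apply: (sqz_eq (c := 1) h) => //; ring.
- exists (-1); split; first by right.
  apply: Or42; apply: (sqz_eq (c := 1) h) => //; ring.
- exists (1); split; first by left.
  apply: Or43; apply: (sqz_eq (c := (r * (r ^+ 2 + s ^+ 2) * (2 * s ^+ 2 - r ^+ 2))) h) => //; ring.
- exists (-1); split; first by right.
  apply: Or43; apply: (sqz_eq (c := (r * (r ^+ 2 + s ^+ 2) * (2 * s ^+ 2 - r ^+ 2))) h) => //; ring.
- exists (-1); split; first by right.
  apply: Or42; apply: (sqz_eq (c := 1) h) => //; ring.
- exists (1); split; first by left.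
  apply: Or42; apply: (sqz_eq (c := 1) h) => //; ring.
- exists (-1); split; first by right.
  apply: Or43; apply: (sqz_eq (c := (r * (r ^+ 2 + s ^+ 2) * (2 * s ^+ 2 - r ^+ 2))) h) => //; ring.
- exists (1); split; first by left.
  apply: Or43; apply: (sqz_eq (c := (r * (r ^+ 2 + s ^+ 2) * (2 * s ^+ 2 - r ^+ 2))) h) => //; ring.
- exists (1); split; first by left.
  apply: Or43; apply: (sqz_eq (c := r) h) => //; ring.
- exists (-1); split; first by right.
  apply: Or43; apply: (sqz_eq (c := r) h) => //; ring.
- exists (1); split; first by left.
  apply: Or42; apply: (sqz_eq (c := (3 * r ^+ 2 * (2 * r ^+ 2 - s ^+ 2))) h) => //; ring.
- exists (-1); split; first by right.
  apply: Or42; apply: (sqz_eq (c := (3 * r ^+ 2 * (2 * r ^+ 2 - s ^+ 2))) h) => //; ring.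
- exists (-1); split; first by right.
  apply: Or43; apply: (sqz_eq (c := r) h) => //; ring.
- exists (1); split; first by left.
  apply: Or43; apply: (sqz_eq (c := r) h) => //; ring.
- exists (-1); split; first by right.
  apply: Or42; apply: (sqz_eq (c := (3 * r ^+ 2 * (2 * r ^+ 2 - s ^+ 2))) h) => //; ring.
- exists (1); split; first by left.
  apply: Or42; apply: (sqz_eq (c := (3 * r ^+ 2 * (2 * r ^+ 2 - s ^+ 2))) h) => //; ring.
- exists (1); split; first by left.
  apply: Or44; apply: (sqz_eq (c := 1) h) => //; ring.
- exists (-1); split; first by right.
  apply: Or44; apply: (sqz_eq (c := 1) h) => //; ring.
- exists (1); split; first by left.
  apply: Or41; apply: (sqz_eq (c := (r * (2 * r ^+ 2 - s ^+ 2) * (2 * s ^+ 2 - r ^+ 2))) h) => //; ring.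
- exists (-1); split; first by right.
  apply: Or41; apply: (sqz_eq (c := (r * (2 * r ^+ 2 - s ^+ 2) * (2 * s ^+ 2 - r ^+ 2))) h) => //; ring.
- exists (-1); split; first by right.
  apply: Or44; apply: (sqz_eq (c := 1) h) => //; ring.
- exists (1); split; first by left.
  apply: Or44; apply: (sqz_eq (c := 1) h) => //; ring.
- exists (-1); split; first by right.
  apply: Or41; apply: (sqz_eq (c := (r * (2 * r ^+ 2 - s ^+ 2) * (2 * s ^+ 2 - r ^+ 2))) h) => //; ring.
- exists (1); split; first by left.
  apply: Or41; apply: (sqz_eq (c := (r * (2 * r ^+ 2 - s ^+ 2) * (2 * s ^+ 2 - r ^+ 2))) h) => //; ring.
Qed.

Lemma ref_3u (r s e : int) : coprimez r s -> r != 0 -> (e = 1 \/ e = -1) ->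
  sqz (e * (3 * (r ^+ 2 + s ^+ 2))) -> False.
Proof.
move=> c r0 he [k hk]; have up := u_pos s r0.
case: he => he; rewrite he in hk.
- rewrite mul1r in hk.
  have [k' hk'] := div3sq (esym hk).
  apply: (not3u (t := k' ^+ 2) c).
  apply: (@mulfI _ (3 : int)) => //; rewrite hk hk' exprMn; clear; rewrite !expr2; lia.
- have := sqr_ge0 k; rewrite -hk; clear -up; lia.
Qed.

Lemma ref_3v (r s e : int) : coprimez r s -> (e = 1 \/ e = -1) ->
  sqz (e * (3 * (2 * r ^+ 2 - s ^+ 2))) -> False.
Proof.
move=> c he [k hk].
have [k' hk'] : exists k', k = 3 * k'.
  by apply: (div3sq (t := e * (2 * r ^+ 2 - s ^+ 2))); rewrite -hk; clear; ring.
apply: (not3v (t := e * k' ^+ 2) c).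
apply: (@mulfI _ (3 : int)) => //.
case: he => he; move: hk; rewrite hk' he; clear; rewrite !expr2; lia.
Qed.

Lemma ref_uw (r s e : int) : coprimez r s -> r != 0 -> (e = 1 \/ e = -1) ->
  sqz (e * ((r ^+ 2 + s ^+ 2) * (2 * s ^+ 2 - r ^+ 2))) -> s = 0.
Proof.
move=> c r0 he [k hk]; have up := u_pos s r0.
have w0 := w_ne0 c. have cuw := cop_uw c.
case: he => he; rewrite he in hk.
- rewrite mul1r in hk.
  have wpos : 0 <= 2 * s ^+ 2 - r ^+ 2.
    by rewrite -(pmulr_rge0 _ up) hk sqr_ge0.
  have [a [b [_ _ ea eb]]] := sq_cop2 cuw (ltW up) wpos hk.
  have e3 : a ^+ 2 + b ^+ 2 = 3 * s ^+ 2 by rewrite -ea -eb; clear; lia.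
  have [[a' ha] [b' hb]] := sq3 e3.
  exfalso.
  have [s' hs'] : exists s', s = 3 * s'.
    apply: (div3sq (t := a' ^+ 2 + b' ^+ 2)).
    move: ea eb; rewrite ha hb; clear; rewrite !expr2; lia.
  have [r' hr'] : exists r', r = 3 * r'.
    apply: (div3sq (t := 3 * a' ^+ 2 - 3 * s' ^+ 2)).
    move: ea; rewrite ha hs'; clear; rewrite !expr2; lia.
  exact: (cop3 c hr' hs').
- have hk' : (r ^+ 2 + s ^+ 2) * (- (2 * s ^+ 2 - r ^+ 2)) = k ^+ 2.
    by rewrite mulrN -hk; clear; ring.
  have wneg : 0 <= - (2 * s ^+ 2 - r ^+ 2).
    by rewrite -(pmulr_rge0 _ up) hk' sqr_ge0.
  have cuw' : coprimez (r ^+ 2 + s ^+ 2) (- (2 * s ^+ 2 - r ^+ 2)) by rewrite coprimezN.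
  have [a [b [_ _ ea eb]]] := sq_cop2 cuw' (ltW up) wneg hk'.
  apply: (C1 (n := `|s|%N) (a := a) (b := b) (leqnn _) c).
  + by rewrite -ea.
  + by rewrite -eb; clear; lia.
Qed.

Lemma ref_vw (r s e : int) : coprimez r s -> (e = 1 \/ e = -1) ->
  sqz (e * ((2 * r ^+ 2 - s ^+ 2) * (2 * s ^+ 2 - r ^+ 2))) -> r ^+ 2 = s ^+ 2.
Proof.
move=> c he [k hk].
have v0 := v_ne0 c. have w0 := w_ne0 c. have cvw := cop_vw c.
have sum : 0 <= (2 * r ^+ 2 - s ^+ 2) + (2 * s ^+ 2 - r ^+ 2).
  have := sqr_ge0 r; have := sqr_ge0 s; clear; lia.
case: he => he; rewrite he in hk.
- rewrite mul1r in hk.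
  case: (boolP (0 < 2 * r ^+ 2 - s ^+ 2)) => hv; last first.
  +
    have nv : 0 < - (2 * r ^+ 2 - s ^+ 2).
      by rewrite oppr_gt0 lt_neqAle v0 leNgt.
    have hw : 2 * s ^+ 2 - r ^+ 2 <= 0.
      rewrite -(pmulr_rle0 _ nv) mulNr hk oppr_le0 sqr_ge0 //.
    have hw' : 2 * s ^+ 2 - r ^+ 2 < 0 by rewrite lt_neqAle w0 hw.
    exfalso; have hv' : 2 * r ^+ 2 - s ^+ 2 < 0 by rewrite -oppr_gt0.
    clear -hv' hw' sum; lia.
  + have hw : 0 <= 2 * s ^+ 2 - r ^+ 2 by rewrite -(pmulr_rge0 _ hv) hk sqr_ge0.
    have [a [b [_ _ ea eb]]] := sq_cop2 cvw (ltW hv) hw hk.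
    apply: (C2 (n := (`|r| + `|s|)%N) (a := a) (b := b)) => //; first by apply: leq_addr.
    by apply: leq_addl.
- exfalso.
  have hk' : (2 * r ^+ 2 - s ^+ 2) * (2 * s ^+ 2 - r ^+ 2) = - k ^+ 2.
    by rewrite -hk; clear; ring.
  case: (boolP (0 < 2 * r ^+ 2 - s ^+ 2)) => hv.
  + have hw : 2 * s ^+ 2 - r ^+ 2 <= 0.
      by rewrite -(pmulr_rle0 _ hv) hk' oppr_le0 sqr_ge0.
    have hw' : 0 <= - (2 * s ^+ 2 - r ^+ 2) by rewrite oppr_ge0.
    have e2 : (2 * r ^+ 2 - s ^+ 2) * (- (2 * s ^+ 2 - r ^+ 2)) = k ^+ 2 by rewrite mulrN hk' opprK.
    have cvw' : coprimez (2 * r ^+ 2 - s ^+ 2) (- (2 * s ^+ 2 - r ^+ 2)) by rewrite coprimezN.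
    have [a [b [_ _ ea eb]]] := sq_cop2 cvw' (ltW hv) hw' e2.
    have e3 : a ^+ 2 + b ^+ 2 = 3 * (s ^+ 2 + b ^+ 2) by rewrite -ea -eb; clear; lia.
    have [[a' ha] [b' hb]] := sq3 e3.
    have [s' hs'] : exists s', s = 3 * s'.
      apply: (div3sq (t := a' ^+ 2 - 2 * b' ^+ 2)).
      move: ea eb; rewrite ha hb; clear; rewrite !expr2; lia.
    have [q [hq|[hq|hq]]] := par3 r; first exact: (cop3 c hq hs').
    * move: ea; rewrite ha hs' hq; clear; rewrite !expr2; lia.
    * move: ea; rewrite ha hs' hq; clear; rewrite !expr2; lia.
  + have hv' : 0 < - (2 * r ^+ 2 - s ^+ 2).
      by rewrite oppr_gt0 lt_neqAle v0 leNgt.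
    have hw : 0 <= 2 * s ^+ 2 - r ^+ 2.
      by rewrite -(pmulr_rge0 _ hv') mulNr hk' opprK sqr_ge0.
    have e2 : (- (2 * r ^+ 2 - s ^+ 2)) * (2 * s ^+ 2 - r ^+ 2) = k ^+ 2 by rewrite mulNr hk' opprK.
    have cvw' : coprimez (- (2 * r ^+ 2 - s ^+ 2)) (2 * s ^+ 2 - r ^+ 2) by rewrite coprimeNz.
    have [a [b [_ _ ea eb]]] := sq_cop2 cvw' (ltW hv') hw e2.
    have e3 : a ^+ 2 + b ^+ 2 = 3 * (r ^+ 2 + a ^+ 2) by rewrite -ea -eb; clear; lia.
    have [[a' ha] [b' hb]] := sq3 e3.
    have [r' hr'] : exists r', r = 3 * r'.
      apply: (div3sq (t := b' ^+ 2 - 2 * a' ^+ 2)).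
      move: ea eb; rewrite ha hb; clear; rewrite !expr2; lia.
    have [q [hq|[hq|hq]]] := par3 s; first exact: (cop3 c hr' hq).
    * move: eb; rewrite hb hr' hq; clear; rewrite !expr2; lia.
    * move: eb; rewrite hb hr' hq; clear; rewrite !expr2; lia.
Qed.

Definition Lexc : seq (int * int) :=
  [:: (1, 0); (-1, 0); (1, 1); (1, -1); (-1, 1); (-1, -1)].

Theorem lemma6p3 :
  exists L : seq (int * int),
    forall r s : int, coprimez r s -> r != 0 ->
      (r, s) \notin L -> ~ exceptional r s.
Proof.
exists Lexc => r s c r0 nL [x xS [y yT cl]].
have [k hk] := same_class_sq cl.
have hsq : sqz (x * y) by exists k.
have [e [he hd]] := classify xS yT c r0 hsq.
have inL : (r, s) \in Lexc.
  case: hd => hd.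
  - by case: (ref_3u c r0 he hd).
  - have s0 := ref_uw c r0 he hd.
    have r1 : `|r|%N = 1%N.
      by move: c; rewrite s0 /coprimez gcdz0 => /eqP [].
    have : r = 1 \/ r = -1 by clear -r1; lia.
    by case=> ->; rewrite s0.
  - by case: (ref_3v c he hd).
  - have e2 := ref_vw c he hd.
    have r1 : `|r|%N = 1%N.
      apply: (copE c (dvdzz r)).
      by case: (sqeq e2) => ->; rewrite dvdzE ?abszN dvdnn.
    have : r = 1 \/ r = -1 by clear -r1; lia.
    have s2 : s ^+ 2 = 1 by rewrite -e2; exact: abs1_sq.
    have : s = 1 \/ s = -1.
      by case: (sqeq (_ : s ^+ 2 = 1 ^+ 2)) => [|->|->]; [rewrite expr1n | left | right].
    by case=> -> ; case=> ->.
by move: nL; rewrite inL.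
Qed.
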